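(* There is an absolute constant $C>0$ such that the following holds. Let $m, k \geq 1$ be integers and $\epsilon\in(0,1)$. Let $A, L$ be finite subsets of a group $G$ with $A$ nonempty, let $\mu$ be a measure on $G$, and denote $f = \mu_A*1_L \cdot (1 - \mu_A*1_L)$. If $\mathbf{a}=(a_1,\ldots,a_k) \in A^k$ is sampled uniformly at random and $k \geq Cm/\epsilon^2$, then \[ \mathbb{E} \| \mu_{\mathbf{a}}*1_L - \mu_A*1_L \|_{L^{2m}(\mu)}^{2m} \leq \epsilon^{2m} \|f\|_{L^m(\mu)}^m + \epsilon^{4m-2} \|f\|_{L^1(\mu)}. \]
   Context: $G$ is an arbitrary (possibly non-abelian) group, viewed as discrete. Convolution: $f*g(x)=\sum_y f(y)g(y^{-1}x)$. $1_X$ is the indicator of $X$, $\mu_X=1_X/|X|$, and for a tuple $\mathbf a=(a_1,\ldots,a_k)$, $\mu_{\mathbf a}=\frac1k\sum_{j=1}^k 1_{\{a_j\}}$, so $\mu_{\mathbf a}*1_L(x)=\frac1k\sum_j 1_L(a_j^{-1}x)$. For a measure $\mu$ on $G$, $\|F\|_{L^p(\mu)}^p=\sum_x \mu(x)|F(x)|^p$. *)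

(* Defs.v *)
From HB Require Import structures.
From mathcomp Require Import all_boot all_order all_algebra.
Set Implicit Arguments. Unset Strict Implicit. Unset Printing Implicit Defensive.
Import Order.TTheory GRing.Theory Num.Theory.
Local Open Scope ring_scope.

Definition is_group (G : Type) (mul : G -> G -> G) (inv : G -> G) (one : G) : Prop :=
  [/\ forall x y z, mul x (mul y z) = mul (mul x y) z,
      forall x, mul one x = x,
      forall x, mul x one = x,
      forall x, mul (inv x) x = one &
      forall x, mul x (inv x) = one].

Definition prodset (G : eqType) (mul : G -> G -> G) (A L : seq G) : seq G :=
  undup [seq mul a l | a <- A, l <- L].

(* mu_A * 1_L (x) = sum_y mu_A(y) 1_L(y^-1 x) = (1/|A|) sum_{a in A} 1_L(a^-1 x),
   for A a duplicate-free list. *)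
Definition convAL (R : realFieldType) (G : eqType) (mul : G -> G -> G) (inv : G -> G)
  (A L : seq G) (x : G) : R :=
  (size A)%:R^-1 * \sum_(a <- A) ((mul (inv a) x \in L) : nat)%:R.

Definition convTL (R : realFieldType) (G : eqType) (mul : G -> G -> G) (inv : G -> G)
  (k : nat) (a : 'I_k -> G) (L : seq G) (x : G) : R :=
  k%:R^-1 * \sum_(j < k) ((mul (inv (a j)) x \in L) : nat)%:R.

(* ||F||_{L^p(mu)}^p = sum_x mu(x) |F(x)|^p, where the sum ranges over a finite
   list S containing the support of F (all functions below are supported on AL). *)
Definition Lpow (R : realFieldType) (G : eqType) (S : seq G) (mu : G -> R)
  (F : G -> R) (p : nat) : R :=
  \sum_(x <- S) mu x * `|F x| ^+ p.

(* Main.v *)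
Require Import Defs.
From HB Require Import structures.
From mathcomp Require Import all_boot all_order all_algebra.
From mathcomp Require Import zify ring lra.
Import Order.TTheory GRing.Theory Num.Theory.
Local Open Scope ring_scope.

Set Implicit Arguments. Unset Strict Implicit. Unset Printing Implicit Defensive.

Module Aux.
Local Open Scope nat_scope.
Lemma mpow_le_ffact m r : r <= m -> m ^ r <= (2 * m) ^_ r.
Proof.
elim: r => [|r IH] Hr; first by rewrite ffactn0.
rewrite ffactnSr expnSr leq_mul ?IH ?(ltnW Hr) //.
by rewrite leq_subRL ?mul2n -?addnn ?leq_add2r ?(ltnW Hr) //; lia.
Qed.

Lemma bin_le_pow n i : 'C(n, i) <= 2 ^ n.
Proof.
case: (ltnP n i) => [lt|le]; first by rewrite bin_small.
have := expnDn 1 1 n; rewrite addn1 => ->.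
rewrite (bigD1 (Ordinal (le : i < n.+1))) //= !exp1n !muln1.
exact: leq_addr.
Qed.

Lemma mpow_le m r : r <= m -> m ^ r <= 4 ^ m * r`!.
Proof.
move=> Hr; apply: leq_trans (mpow_le_ffact Hr) _.
rewrite -bin_ffact leq_mul2r; apply/orP; right.
have -> : 4 ^ m = 2 ^ (2 * m) by rewrite expnM.
exact: bin_le_pow.
Qed.

Lemma natfin m r : 1 <= r -> r <= m ->
  64 ^ m * m ^ (2 * m) <= r`! * (256 ^ (2 * m - r) * m ^ (2 * m - r)).
Proof.
move=> H1 Hr.
have E : 2 * m = r + (2 * m - r) by rewrite subnKC //; lia.
rewrite {1}E expnD mulnA.
have h1 : 64 ^ m * m ^ r <= 256 ^ m * r`!.
  have -> : 256 ^ m = 64 ^ m * 4 ^ m by rewrite -expnMn.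
  by rewrite -mulnA leq_mul2l mpow_le ?orbT.
have h2 : 256 ^ m <= 256 ^ (2 * m - r) by rewrite leq_exp2l //; lia.
apply: (leq_trans (leq_mul h1 (leqnn _))).
rewrite mulnA [r`! * _]mulnC leq_mul2r leq_mul2r h2 !orbT //.
Qed.

Lemma N1 m : 2 * (2 * m.+1).+2 ^ 2 * (64 ^ m.+1 * m.+1 ^ (2 * m.+1 - 1))
   <= 64 ^ m.+2 * m.+2 ^ (2 * m.+2 - 1).
Proof.
have -> : (2 * m.+1 - 1 = 2 * m + 1)%N by lia.
have -> : (2 * m.+2 - 1 = (2 * m + 1) + 2)%N by lia.
have -> : ((2 * m.+1).+2 = 2 * m.+2)%N by lia.
rewrite (expnD m.+2 (2 * m + 1) 2) (expnS 64 m.+1) expnMn.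
have h : m.+1 ^ (2 * m + 1) <= m.+2 ^ (2 * m + 1) by rewrite leq_exp2r //; lia.
move: h; set A := m.+1 ^ _; set B := m.+2 ^ _; set P := 64 ^ m.+1 => h.
have -> : (2 * (2 ^ 2 * m.+2 ^ 2) * (P * A) = 8 * (m.+2 ^ 2 * P * A))%N by ring.
have -> : (64 * P * (B * m.+2 ^ 2) = 64 * (m.+2 ^ 2 * P * B))%N by ring.
rewrite leq_mul //; by rewrite leq_mul2l h orbT.
Qed.

Lemma N0 m : (2 * m.+1).+2 ^ 2 * (2 * (2 * m.+1) + 1) ^ (2 * m.+1)
   <= 64 ^ m.+2 * m.+2 ^ (2 * m.+2 - 1).
Proof.
have -> : (2 * m.+2 - 1 = (2 * m.+1) + 1)%N by lia.
have -> : ((2 * m.+1).+2 = 2 * m.+2)%N by lia.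
have h1 : (2 * (2 * m.+1) + 1) ^ (2 * m.+1) <= (4 * m.+2) ^ (2 * m.+1).
  by rewrite leq_exp2r //; lia.
have e4 : ((4 * m.+2) ^ (2 * m.+1) = 16 ^ m.+1 * m.+2 ^ (2 * m.+1))%N.
  by rewrite expnMn expnM.
have h2 : m.+2 <= 4 ^ m.+1 by have := ltn_expl m.+1 (isT : 1 < 4).
have e64 : (64 ^ m.+2 = 64 * 16 ^ m.+1 * 4 ^ m.+1)%N.
  by rewrite expnS -mulnA -expnMn.
rewrite e64 expnD expn1.
apply: leq_trans (leq_mul (leqnn _) h1) _.
rewrite e4 expnMn.
set P := 16 ^ m.+1 in e64 *; set Q := 4 ^ m.+1 in h2 *; set B := m.+2 ^ (2 * m.+1).
have -> : (2 ^ 2 * m.+2 ^ 2 * (P * B) = (4 * m.+2) * (m.+2 * P * B))%N.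
  by ring.
have -> : (64 * P * Q * (B * m.+2) = (64 * Q) * (m.+2 * P * B))%N by ring.
rewrite leq_mul2r; apply/orP; right; lia.
Qed.

Lemma e_ee M : 0 < M -> 2 * M = (2 * M - 1).+1.
Proof. lia. Qed.
Lemma e_4 M : 4 * M - 2 = 2 * (2 * M - 1).
Proof. lia. Qed.

Local Open Scope ring_scope.
Section Real.
Variable R : realFieldType.

Lemma eqW (x y : R) : x = y -> x <= y. Proof. by move->. Qed.

Lemma bern (a : R) n : 0 <= a -> (a + 1) ^+ n * (a - n%:R) <= a ^+ n.+1.
Proof.
move=> a0; elim: n => [|n IH]; first by rewrite !expr0 mul1r subr0 expr1.
have p0 : 0 <= (a + 1) ^+ n by apply: exprn_ge0; lra.
have e : (a + 1) ^+ n.+1 * (a - n.+1%:R) =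
   a * ((a + 1) ^+ n * (a - n%:R)) - (a+1)^+n * n.+1%:R.
  by rewrite exprS -natr1; ring.
rewrite e exprS.
have h1 : a * ((a + 1) ^+ n * (a - n%:R)) <= a * a ^+ n.+1 by rewrite ler_wpM2l.
have h2 : 0 <= (a+1)^+n * n.+1%:R by rewrite mulr_ge0.
lra.
Qed.

Lemma plus1_pow (a : R) n : 0 <= a ->
  (a + 1) ^+ n <= 2 * a ^+ n + (2 * n + 1)%:R ^+ n.
Proof.
move=> a0.
have g1 : 0 <= a ^+ n by apply: exprn_ge0.
have g2 : 0 <= (2 * n + 1)%:R ^+ n :> R by apply: exprn_ge0.
case: (leP (2 * n)%:R a) => H.
- case: n H g1 g2 => [|n] H g1 g2; first by rewrite !expr0; lra.
  have apos : 0 < a by apply: lt_le_trans H; rewrite ltr0n; lia.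
  have hb := bern n.+1 a0.
  have p0 : 0 <= (a + 1) ^+ n.+1 by apply: exprn_ge0; lra.
  suff : (a + 1) ^+ n.+1 <= 2 * a ^+ n.+1 by lra.
  rewrite -(ler_pM2r apos).
  have : (a + 1) ^+ n.+1 * a <= 2 * ((a + 1) ^+ n.+1 * (a - n.+1%:R)).
    have : a <= 2 * (a - n.+1%:R) by clear -H; move: H; rewrite natrM => h; lra.
    move=> h; rewrite mulrCA ler_wpM2l //.
  move=> h1; apply: (le_trans h1).
  by rewrite -mulrA ler_wpM2l // -exprSr.
- have : (a + 1) ^+ n <= (2 * n + 1)%:R ^+ n.
    by rewrite lerXn2r ?nnegrE ?natrD ?natrM; lra.
  lra.
Qed.

Definition D (q : nat) (s b : R) :=
  (s + b) ^+ q.+2 - s ^+ q.+2 - q.+2%:R * s ^+ q.+1 * b.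

Lemma D_bound q (s b : R) : `|b| <= 1 ->
  `|D q s b| <= b ^+ 2 * (q.+2%:R ^+ 2 * (`|s| + 1) ^+ q).
Proof.
move=> hb; elim: q => [|q IH].
  rewrite /D expr0 mulr1.
  have -> : (s + b) ^+ 2 - s ^+ 2 - 2%:R * s ^+ 1 * b = b ^+ 2 by ring.
  rewrite ger0_norm ?sqr_ge0 //.
  have := sqr_ge0 b; have -> : (2%:R ^+ 2 : R) = 4 by rewrite expr2 -natrM.
  lra.
have e : D q.+1 s b = (s + b) * D q s b + q.+2%:R * s ^+ q.+1 * b ^+ 2.
  rewrite /D -!natr1; rewrite !exprS; ring.
rewrite e.
have s0 : 0 <= `|s| by [].
set u := `|s| + 1.
have u0 : 0 <= u by rewrite /u; lra.
have b2 : 0 <= b ^+ 2 by apply: sqr_ge0.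
have t1 : `|(s + b) * D q s b| <= u * (b ^+ 2 * (q.+2%:R ^+ 2 * u ^+ q)).
  rewrite normrM ler_pM //.
  by rewrite /u (le_trans (ler_normD _ _)) // lerD2l.
have t2 : `|q.+2%:R * s ^+ q.+1 * b ^+ 2| <= q.+2%:R * u ^+ q.+1 * b ^+ 2.
  rewrite normrM [`|b ^+ 2|]ger0_norm ?sqr_ge0 // normrM normr_nat normrX.
  rewrite ler_wpM2r ?sqr_ge0 // ler_wpM2l //.
  by rewrite lerXn2r ?nnegrE /u; lra.
apply: (le_trans (ler_normD _ _)).
have u1 : 0 <= u ^+ q by apply: exprn_ge0.
have : u * (b ^+ 2 * (q.+2%:R ^+ 2 * u ^+ q)) + q.+2%:R * u ^+ q.+1 * b ^+ 2
   <= b ^+ 2 * (q.+3%:R ^+ 2 * u ^+ q.+1).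
  have h : (q.+2%:R ^+ 2 + q.+2%:R : R) <= q.+3%:R ^+ 2.
    have -> : (q.+3%:R : R) = q.+2%:R + 1 by rewrite -natr1.
    have := ler0n R q.+2; nra.
  have c : 0 <= b ^+ 2 * (u * u ^+ q).
    by apply: mulr_ge0; [apply: sqr_ge0 | apply: mulr_ge0].
  have := ler_wpM2l c h. 
  move=> hh.
  have -> : u * (b ^+ 2 * (q.+2%:R ^+ 2 * u ^+ q)) + q.+2%:R * u ^+ q.+1 * b ^+ 2
     = b ^+ 2 * (u * u ^+ q) * (q.+2%:R ^+ 2 + q.+2%:R) by rewrite [u ^+ q.+1]exprS; ring.
  have -> : b ^+ 2 * (q.+3%:R ^+ 2 * u ^+ q.+1) = b ^+ 2 * (u * u ^+ q) * q.+3%:R ^+ 2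
    by rewrite [u ^+ q.+1]exprS; ring.
  exact: hh.
lra.
Qed.

Lemma expand_le q (s b : R) : `|b| <= 1 ->
  (s + b) ^+ q.+2 <= s ^+ q.+2 + q.+2%:R * s ^+ q.+1 * b
                     + b ^+ 2 * (q.+2%:R ^+ 2 * (`|s| + 1) ^+ q).
Proof.
move=> hb; have := D_bound q s hb; rewrite /D => h.
have := ler_norm ((s + b) ^+ q.+2 - s ^+ q.+2 - q.+2%:R * s ^+ q.+1 * b). lra.
Qed.

Lemma ypow r (y v : R) : 0 <= y -> 0 <= v ->
  y ^+ r.+1 + r.+1%:R * v * y ^+ r <= (y + v) ^+ r.+1.
Proof.
move=> y0 v0; elim: r => [|r IH]; first by rewrite !expr1 expr0; lra.
rewrite [(y+v)^+r.+2]exprS.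
have p : 0 <= y + v by lra.
have := ler_wpM2l p IH.
have g1 : 0 <= y ^+ r by apply: exprn_ge0.
have : 0 <= r.+1%:R * v * v * y ^+ r by rewrite !mulr_ge0.
rewrite -[r.+2%:R]natr1 !exprS. nra.
Qed.

Lemma interp (x B : R) r m : 0 <= x -> 0 <= B -> (1 <= r)%N -> (r <= m)%N ->
  x ^+ r * B ^+ (2 * m - r) <= B ^+ m * x ^+ m + B ^+ (2 * m - 1) * x.
Proof.
move=> x0 B0 r1 rm.
have g1 : 0 <= B ^+ m * x ^+ m by rewrite mulr_ge0 ?exprn_ge0.
have g2 : 0 <= B ^+ (2 * m - 1) * x by rewrite mulr_ge0 ?exprn_ge0.
case: (leP x B) => H.
- suff : x ^+ r * B ^+ (2 * m - r) <= B ^+ (2 * m - 1) * x by lra.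
  have -> : (2 * m - 1 = (r - 1) + (2 * m - r))%N by lia.
  have -> : x ^+ r = x * x ^+ (r - 1) by rewrite -exprS; congr (_ ^+ _); lia.
  have h : x ^+ (r-1) <= B ^+ (r-1) by rewrite lerXn2r ?nnegrE.
  have Z0 : 0 <= x * B ^+ (2 * m - r) by rewrite mulr_ge0 ?exprn_ge0.
  have := ler_wpM2l Z0 h; rewrite exprD.
  have -> : x * x ^+ (r - 1) * B ^+ (2 * m - r) = x * B ^+ (2 * m - r) * x ^+ (r - 1) by ring.
  have -> : B ^+ (r - 1) * B ^+ (2 * m - r) * x = x * B ^+ (2 * m - r) * B ^+ (r - 1) by ring.
  by [].
- suff : x ^+ r * B ^+ (2 * m - r) <= B ^+ m * x ^+ m by lra.
  have -> : (2 * m - r = m + (m - r))%N by lia.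
  have -> : x ^+ m = x ^+ r * x ^+ (m - r) by rewrite -exprD; congr (_ ^+ _); lia.
  have h : B ^+ (m - r) <= x ^+ (m - r) by rewrite lerXn2r ?nnegrE; lra.
  have Z0 : 0 <= x ^+ r * B ^+ m by rewrite mulr_ge0 ?exprn_ge0.
  have := ler_wpM2l Z0 h; rewrite exprD.
  have -> : x ^+ r * (B ^+ m * B ^+ (m - r)) = x ^+ r * B ^+ m * B ^+ (m - r) by ring.
  have -> : B ^+ m * (x ^+ r * x ^+ (m - r)) = x ^+ r * B ^+ m * x ^+ (m - r) by ring.
  by [].
Qed.
End Real.

Section Mom.
Variable R : realFieldType.
Variable n : nat.
Variable X : 'I_n -> R.

Definition Sm k (t : {ffun 'I_k -> 'I_n}) : R := \sum_(j < k) X (t j).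
Definition Pk k (phi : R -> R) : R := \sum_(t : {ffun 'I_k -> 'I_n}) phi (Sm t).

Definition extf k (p : {ffun 'I_k -> 'I_n} * 'I_n) : {ffun 'I_k.+1 -> 'I_n} :=
  [ffun j => if unlift ord_max j is Some j' then p.1 j' else p.2].
Definition resf k (t : {ffun 'I_k.+1 -> 'I_n}) : {ffun 'I_k -> 'I_n} * 'I_n :=
  ([ffun j => t (lift ord_max j)], t ord_max).

Lemma extfK k : cancel (@extf k) (@resf k).
Proof.
case=> t a; rewrite /resf /extf /=; congr pair.
  by apply/ffunP => j; rewrite !ffunE liftK.
by rewrite ffunE unlift_none.
Qed.

Lemma resfK k : cancel (@resf k) (@extf k).
Proof.
move=> t; apply/ffunP => j; rewrite /extf /resf ffunE /=.
case: unliftP => [j' ->|->] //; by rewrite ffunE.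
Qed.

Lemma Sm_ext k p : Sm (@extf k p) = Sm p.1 + X p.2.
Proof.
rewrite /Sm big_ord_recr /= /extf ffunE unlift_none; congr (_ + _).
apply: eq_bigr => j _; rewrite ffunE.
have -> : widen_ord (leqnSn k) j = lift ord_max j by apply: val_inj; rewrite [RHS]lift_max.
by rewrite liftK.
Qed.

Lemma Pk_S k phi :
  Pk k.+1 phi = \sum_(t : {ffun 'I_k -> 'I_n}) \sum_(a < n) phi (Sm t + X a).
Proof.
rewrite /Pk (reindex (@extf k)) /=; last first.
  by exists (@resf k) => x _; [apply: extfK | apply: resfK].
rewrite [RHS]pair_big /=; apply: eq_bigr => p _; by rewrite Sm_ext.
Qed.

Lemma Pk_const k c : Pk k (fun _ => c) = (n ^ k)%:R * c.
Proof.
by rewrite /Pk sumr_const card_ffun !card_ord mulr_natl.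
Qed.

Lemma Pk_le k phi psi : (forall s, phi s <= psi s) -> Pk k phi <= Pk k psi.
Proof. by move=> h; apply: ler_sum => t _. Qed.

Lemma Pk_add k phi psi : Pk k (fun s => phi s + psi s) = Pk k phi + Pk k psi.
Proof. by rewrite /Pk big_split. Qed.

Lemma Pk_scale k c phi : Pk k (fun s => c * phi s) = c * Pk k phi.
Proof. by rewrite /Pk mulr_sumr. Qed.

Definition Mk k q := Pk k (fun s => s ^+ q).

Lemma Mk0 q : Mk 0 q.+1 = 0.
Proof.
rewrite /Mk /Pk; apply: big1 => t _; by rewrite /Sm big_ord0 expr0n.
Qed.

Variable v : R.
Hypothesis sumX : \sum_(a < n) X a = 0.
Hypothesis bX : forall a, `|X a| <= 1.
Hypothesis sum2 : \sum_(a < n) X a ^+ 2 = n%:R * v.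

Lemma Mk_step k q :
  Mk k.+1 q.+2 <= n%:R * Mk k q.+2 +
     n%:R * v * (q.+2%:R ^+ 2 * Pk k (fun s => (`|s| + 1) ^+ q)).
Proof.
rewrite /Mk Pk_S -Pk_scale -Pk_scale -Pk_scale -Pk_add /Pk.
apply: ler_sum => t _.
set S := Sm t.
apply: le_trans (ler_sum _ (fun a _ => expand_le q S (bX a))) _.
rewrite big_split big_split /= sumr_const card_ord -!mulr_sumr -mulr_suml sumX sum2.
by rewrite mulr0 addr0 [n%:R * S ^+ _]mulr_natl.
Qed.


Lemma integ (M : nat -> R) N (c : nat -> R) :
  0 <= v -> M 0 = 0 -> (forall r, 0 <= c r) ->
  (forall k, M k.+1 <= n%:R * M k +
      (n ^ k.+1)%:R * v * \sum_(r < N) c r * (k%:R * v) ^+ r) ->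
  forall K, M K <= (n ^ K)%:R * \sum_(r < N) c r / r.+1%:R * (K%:R * v) ^+ r.+1.
Proof.
move=> v0 M0 c0 hM; elim=> [|K IH].
  by rewrite M0 big1 ?mulr0 // => r _; rewrite mul0r expr0n mulr0.
apply: le_trans (hM K) _.
set y := K%:R * v.
have y0 : 0 <= y by rewrite mulr_ge0.
have n0 : 0 <= n%:R :> R by [].
have h1 := ler_wpM2l n0 IH.
apply: le_trans (lerD h1 (lexx _)) _.
have -> : (K.+1%:R * v) = y + v by rewrite -natr1 mulrDl mul1r.
rewrite mulrA -natrM -expnS -/y -mulrA -mulrDr.
rewrite ler_wpM2l // mulr_sumr -big_split /=.
apply: ler_sum => r _.
have r0 : 0 < r.+1%:R :> R by rewrite ltr0n.
have cr : 0 <= c r / r.+1%:R by rewrite divr_ge0 ?c0 ?ltW.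
have := ler_wpM2l cr (ypow r y0 v0).
have -> : c r / r.+1%:R * (y ^+ r.+1 + r.+1%:R * v * y ^+ r)
   = c r / r.+1%:R * y ^+ r.+1 + v * (c r * y ^+ r).
  rewrite mulrDr; congr (_ + _); field; by rewrite addrC natr1 pnatr_eq0.
by [].
Qed.

Definition acoef m r : R := (64 ^ m * m ^ (2 * m - 1))%:R / (r.+1)`!%:R.

Lemma Pk_ext k phi psi : (forall s, phi s = psi s) -> Pk k phi = Pk k psi.
Proof. by move=> h; apply: eq_bigr => t _. Qed.

Lemma norm_even (s : R) j : `|s| ^+ (2 * j) = s ^+ (2 * j).
Proof.
by rewrite -normrX ger0_norm // exprn_even_ge0 // mul2n odd_double.
Qed.

Lemma sum_cmp N (c a : nat -> R) (y : R) : 0 <= y ->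
  (forall r, (r < N)%N -> c r / r.+1%:R <= a r) ->
  \sum_(r < N) c r / r.+1%:R * y ^+ r.+1 <= \sum_(r < N) a r * y ^+ r.+1.
Proof.
move=> y0 h; apply: ler_sum => r _; rewrite ler_wpM2r ?exprn_ge0 //.
exact: h.
Qed.

Lemma acoef_ge0 m r : 0 <= acoef m r.
Proof. by rewrite /acoef divr_ge0. Qed.

Lemma mom m : 0 <= v -> forall k,
  Mk k (2 * m.+1) <= (n ^ k)%:R * \sum_(r < m.+1) acoef m.+1 r * (k%:R * v) ^+ r.+1.
Proof.
move=> v0; elim: m => [|m IH] K.
- have := @integ (fun k => Mk k 2) 1 (fun _ => 4) v0 (Mk0 1).
  move=> /(_ (fun _ => ler0n R 4)).
  move=> /(_ _) h.
  apply: le_trans (h _ K) _.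
    move=> k; apply: le_trans (Mk_step k 0) _.
    have e : Pk k (fun s => (`|s| + 1) ^+ 0) = Pk k (fun _ => 1).
      by apply: Pk_ext => s; rewrite expr0.
    rewrite e Pk_const.
    rewrite big_ord1 expr0 !natrX [n%:R ^+ k.+1]exprS; apply/eqW; ring.
  rewrite ler_wpM2l //; apply: (@sum_cmp 1 (fun _ => 4) (acoef 1)); first by rewrite mulr_ge0.
  case=> [|r] // _; rewrite /acoef /=.
  rewrite (_ : (64 ^ 1 * 1 ^ (2 * 1 - 1) = 64)%N) // (_ : 1`! = 1)%N // !divr1; lra.
- set q := (2 * m.+1)%N.
  have eq : (2 * m.+2 = q.+2)%N by rewrite /q; lia.
  rewrite eq.
  pose c r := if r is r'.+1 then 2 * q.+2%:R ^+ 2 * acoef m.+1 r'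
              else q.+2%:R ^+ 2 * (2 * q + 1)%:R ^+ q.
  have c0 : forall r, 0 <= c r.
    rewrite /c; case=> [|r].
      by apply: mulr_ge0; apply: exprn_ge0.
    by apply: mulr_ge0; [apply: mulr_ge0; [|apply: exprn_ge0] | apply: acoef_ge0].
  have := @integ (fun k => Mk k q.+2) m.+2 c v0 (Mk0 q.+1) c0.
  move=> /(_ _) h.
  apply: le_trans (h _ K) _.
    move=> k; apply: le_trans (Mk_step k q) _.
    rewrite lerD2l.
    set y := k%:R * v.
    have y0 : 0 <= y by rewrite mulr_ge0.
    have hP : Pk k (fun s => (`|s| + 1) ^+ q) <=
        2 * ((n ^ k)%:R * \sum_(r < m.+1) acoef m.+1 r * y ^+ r.+1)
        + (n ^ k)%:R * (2 * q + 1)%:R ^+ q.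
      have hle : Pk k (fun s => (`|s| + 1) ^+ q) <=
                 Pk k (fun s => 2 * s ^+ q + (2 * q + 1)%:R ^+ q).
        by apply: Pk_le => s; rewrite -[in X in _ <= X](norm_even s m.+1) plus1_pow.
      apply: le_trans hle _.
      rewrite Pk_add Pk_scale Pk_const lerD2r ler_wpM2l //.
      exact: IH.
    have nv : 0 <= n%:R * v * q.+2%:R ^+ 2 by rewrite !mulr_ge0.
    rewrite mulrA; apply: le_trans (ler_wpM2l nv hP) _.
    rewrite [X in _ <= _ * X]big_ord_recl /= expr0 mulr1.
    have -> : \sum_(i < m.+1) 2 * q.+2%:R ^+ 2 * acoef m.+1 i * y ^+ i.+1
       = 2 * q.+2%:R ^+ 2 * \sum_(r < m.+1) acoef m.+1 r * y ^+ r.+1.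
      by rewrite mulr_sumr; apply: eq_bigr => i _; rewrite mulrA.
    rewrite !natrX [n%:R ^+ k.+1]exprS; apply/eqW; ring.
  rewrite ler_wpM2l //; apply: (@sum_cmp m.+2 c (acoef m.+2)); first by rewrite mulr_ge0.
  case=> [|r] _; rewrite /c /acoef.
    rewrite (_ : 1`! = 1)%N // !divr1 -!natrX -natrM ler_nat.
    exact: N0.
  have hN := N1 m.
  move: hN; set A := (64 ^ m.+1 * m.+1 ^ (2 * m.+1 - 1))%N.
  set B := (64 ^ m.+2 * m.+2 ^ (2 * m.+2 - 1))%N => hN.
  have e : (r.+2`! = r.+2 * r.+1`!)%N by rewrite factS.
  rewrite e natrM.
  have f1 : (r.+1`!%:R : R) != 0 by rewrite pnatr_eq0 -lt0n fact_gt0.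
  have f2 : (r.+2%:R : R) != 0 by rewrite pnatr_eq0.
  move: f1; set F := (r.+1`!%:R : R) => f1.
  have g1 : (1 + r%:R : R) != 0 by rewrite addrC natr1 pnatr_eq0.
  have g2 : (2 + r%:R : R) != 0 by rewrite -natrD pnatr_eq0.
  have -> : 2 * q.+2%:R ^+ 2 * (A%:R / F) / r.+2%:R
      = (2 * q.+2 ^ 2 * A)%N%:R / (r.+2%:R * F) :> R.
    rewrite !natrM natrX; field; by rewrite ?f1 ?g1 ?g2.
  rewrite ler_pM2r ?ler_nat; first exact: hN.
  by rewrite invr_gt0 mulr_gt0 // ltr0n fact_gt0.
Qed.

Lemma point m k (eps : R) : (1 <= m)%N -> 0 < eps -> 0 <= v ->
  256%:R * m%:R / eps ^+ 2 <= k%:R ->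
  Mk k (2 * m) <= (n ^ k)%:R * (k%:R ^+ (2 * m) *
                     (eps ^+ (2 * m) * v ^+ m + eps ^+ (4 * m - 2) * v)).
Proof.
case: m => [|m] // _ e0 v0 hk.
apply: le_trans (mom m v0 k) _; rewrite ler_wpM2l //.
set M := m.+1.
set x := k%:R * v.
have x0 : 0 <= x by rewrite mulr_ge0.
set B : R := 256%:R * M%:R.
have B0 : 0 <= B by rewrite mulr_ge0.
have e2 : 0 < eps ^+ 2 by rewrite exprn_gt0.
have hB : B <= k%:R * eps ^+ 2 by rewrite -ler_pdivrMr.
have hB1 : B ^+ M <= (k%:R * eps ^+ 2) ^+ M by rewrite lerXn2r ?nnegrE // mulr_ge0 // ltW.
have hB2 : B ^+ (2 * M - 1) <= (k%:R * eps ^+ 2) ^+ (2 * M - 1)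
  by rewrite lerXn2r ?nnegrE // mulr_ge0 // ltW.
set T := B ^+ M * x ^+ M + B ^+ (2 * M - 1) * x.
have hT : T <= k%:R ^+ (2 * M) * (eps ^+ (2 * M) * v ^+ M + eps ^+ (4 * M - 2) * v).
  have E1 : k%:R ^+ (2 * M) * (eps ^+ (2 * M) * v ^+ M) = (k%:R * eps ^+ 2) ^+ M * x ^+ M.
    rewrite /x !exprMn mul2n -addnn !exprD; ring.
  have E2 : k%:R ^+ (2 * M) * (eps ^+ (4 * M - 2) * v) =
            (k%:R * eps ^+ 2) ^+ (2 * M - 1) * x.
    rewrite e_4.
    set J := (2 * M - 1)%N.
    have -> : (2 * M = J.+1)%N by apply: e_ee.
    rewrite exprS /x !exprMn mul2n -addnn exprD; ring.
  rewrite mulrDr E1 E2 /T lerD // ler_wpM2r ?exprn_ge0 //.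
apply: le_trans hT.
have Mpos : 0 < M%:R :> R by rewrite ltr0n.
have hterm : forall r : 'I_M, acoef M r * x ^+ r.+1 <= T / M%:R.
  move=> r; rewrite ler_pdivlMr //.
  have hr : (r.+1 <= M)%N by exact: ltn_ord r.
  have hi := interp x0 B0 (isT : (1 <= r.+1)%N) hr.
  apply: le_trans hi.
  have hn := natfin (isT : (1 <= r.+1)%N) hr.
  have hnR : (64 ^ M * M ^ (2 * M))%:R <= (r.+1)`!%:R * B ^+ (2 * M - r.+1) :> R.
    rewrite /B exprMn -!natrX -!natrM ler_nat; exact: hn.
  have fpos : 0 < (r.+1)`!%:R :> R by rewrite ltr0n fact_gt0.
  have -> : acoef M r * x ^+ r.+1 * M%:R
          = (64 ^ M * M ^ (2 * M))%:R / (r.+1)`!%:R * x ^+ r.+1 :> R.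
    have eM : (64 ^ M * M ^ (2 * M) = (64 ^ M * M ^ (2 * M - 1)) * M)%N.
      have ee : (2 * M = (2 * M - 1).+1)%N by apply: e_ee.
      by rewrite {1}ee expnSr mulnA.
    rewrite /acoef eM.
    move: fpos; set G := (64 ^ M * M ^ (2 * M - 1))%N; set F := (r.+1)`! => fpos.
    rewrite natrM -mulrA [x ^+ _ * _]mulrC !mulrA; congr (_ * _); exact: mulrAC.
  rewrite [x ^+ _ * _]mulrC ler_wpM2r ?exprn_ge0 // ler_pdivrMr // mulrC.
  exact: hnR.
apply: le_trans (ler_sum _ (fun r _ => hterm r)) _.
rewrite sumr_const card_ord -[_ *+ M]mulr_natr divfK //.
by rewrite gt_eqF.
Qed.

End Mom.

Lemma per_point (R : realFieldType) N (h : 'I_N -> R) m k (eps p : R) :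
  (0 < N)%N -> (forall a, h a = 0 \/ h a = 1) -> (1 <= m)%N -> (1 <= k)%N -> 0 < eps ->
  256%:R * m%:R / eps ^+ 2 <= k%:R ->
  p = N%:R^-1 * \sum_(a < N) h a ->
  N%:R ^- k * \sum_(t : {ffun 'I_k -> 'I_N}) `| k%:R^-1 * \sum_(j < k) h (t j) - p| ^+ (2 * m)
   <= eps ^+ (2 * m) * `|p * (1 - p)| ^+ m + eps ^+ (4 * m - 2) * `|p * (1 - p)| ^+ 1.
Proof.
move=> N0 h01 m1 k1 e0 hk hp.
have Np : 0 < N%:R :> R by rewrite ltr0n.
have kp : 0 < k%:R :> R by rewrite ltr0n.
have hs0 : 0 <= \sum_(a < N) h a.
  by apply: sumr_ge0 => a _; case: (h01 a) => ->; lra.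
have hs1 : \sum_(a < N) h a <= N%:R.
  have := @ler_sum _ _ (index_enum 'I_N) xpredT h (fun _ => 1).
  rewrite sumr_const card_ord => H; apply: le_trans (H _) _.
    by move=> a _; case: (h01 a) => ->; lra.
  by rewrite -[1 *+ N]mulr_natr mul1r.
have Ep : \sum_(a < N) h a = N%:R * p by rewrite hp mulrA divff ?mul1r // gt_eqF.
have p0 : 0 <= p by rewrite hp mulr_ge0 // invr_ge0 ltW.
have p1 : p <= 1.
  by rewrite hp ler_pdivrMl // mulr1.
set v := p * (1 - p).
have v0 : 0 <= v by rewrite /v mulr_ge0 //; lra.
pose X := fun a => h a - p.
have sumX : \sum_(a < N) X a = 0.
  by rewrite /X sumrB Ep sumr_const card_ord mulr_natl subrr.
have bX : forall a, `|X a| <= 1.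
  move=> a; rewrite /X; case: (h01 a) => ->.
    by rewrite sub0r normrN ger0_norm.
  by rewrite ger0_norm; lra.
have sum2 : \sum_(a < N) X a ^+ 2 = N%:R * v.
  have e : forall a, X a ^+ 2 = h a * (1 - 2 * p) + p ^+ 2.
    by move=> a; rewrite /X; case: (h01 a) => ->; ring.
  rewrite (eq_bigr _ (fun a _ => e a)) big_split /= -mulr_suml Ep sumr_const card_ord.
  rewrite -[p ^+ 2 *+ N]mulr_natl /v; ring.
have hpt := point sumX bX sum2 m1 e0 v0 hk.
have eT : forall t : {ffun 'I_k -> 'I_N},
    `| k%:R^-1 * \sum_(j < k) h (t j) - p| ^+ (2 * m)
    = k%:R^-1 ^+ (2 * m) * (Sm X t) ^+ (2 * m).
  move=> t; rewrite norm_even -exprMn /Sm /X sumrB sumr_const card_ord.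
  congr (_ ^+ _); rewrite -[p *+ k]mulr_natl; field; by rewrite gt_eqF.
rewrite (eq_bigr _ (fun t _ => eT t)) -mulr_sumr.
have -> : \sum_(t : {ffun 'I_k -> 'I_N}) Sm X t ^+ (2 * m) = Mk X k (2 * m) by [].
rewrite ger0_norm // expr1.
have c0 : 0 <= N%:R ^- k * k%:R^-1 ^+ (2 * m) :> R.
  by rewrite mulr_ge0 // ?invr_ge0 ?exprn_ge0 // ?invr_ge0 // ltW.
rewrite mulrA; apply: le_trans (ler_wpM2l c0 hpt) _.
apply/eqW; rewrite natrX exprVn; field.
by rewrite !expf_neq0 // gt_eqF.
Qed.

End Aux.
Import Aux.
Unset Implicit Arguments.

Theorem lemma14 :
  exists C : nat, (0 < C)%N /\
  forall (R : realFieldType) (G : eqType) (mul : G -> G -> G) (inv : G -> G) (one : G),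
    is_group mul inv one ->
  forall (m k : nat) (eps : R) (A L : seq G) (mu : G -> R),
    (1 <= m)%N -> (1 <= k)%N -> 0 < eps -> eps < 1 ->
    uniq A -> uniq L -> A != [::] ->
    (forall x, 0 <= mu x) ->
    C%:R * m%:R / eps ^+ 2 <= k%:R ->
    let g := convAL R mul inv A L in
    let f := fun x => g x * (1 - g x) in
    let S := prodset mul A L in
    (size A)%:R ^- k *
      \sum_(t : {ffun 'I_k -> 'I_(size A)})
         Lpow S mu (fun x => convTL R mul inv (fun j => nth one A (t j)) L x - g x) (2 * m)
    <= eps ^+ (2 * m) * Lpow S mu f m + eps ^+ (4 * m - 2) * Lpow S mu f 1.
Proof.
exists 256%N; split => //.
move=> R G mul inv one _ m k eps A L mu m1 k1 e0 e1 uA uL A0 mu0 hk.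
cbv zeta; rewrite /Lpow.
set g := convAL R mul inv A L.
have N0 : (0 < size A)%N by rewrite lt0n size_eq0.
rewrite exchange_big mulr_sumr !mulr_sumr -big_split /=.
apply: ler_sum => x _.
pose h := fun a : 'I_(size A) => (((mul (inv (nth one A a)) x \in L) : nat)%:R : R).
have hp : g x = (size A)%:R^-1 * \sum_(a < size A) h a.
  by rewrite /g /convAL (big_nth one) big_mkord.
have h01 : forall a, h a = 0 \/ h a = 1.
  by move=> a; rewrite /h; case: (_ \in L); [right|left].
have hpp := per_point N0 h01 m1 k1 e0 hk hp.
rewrite -mulr_sumr mulrCA.
set fx := g x * (1 - g x).
have -> : eps ^+ (2 * m) * (mu x * `|fx| ^+ m) + eps ^+ (4 * m - 2) * (mu x * `|fx| ^+ 1)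
   = mu x * (eps ^+ (2 * m) * `|fx| ^+ m + eps ^+ (4 * m - 2) * `|fx| ^+ 1) by ring.
exact: (ler_wpM2l (mu0 x) hpp).
Qed.
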